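(* Let $V$ be an $n$-dimensional vector space over a field $K$ and $\mathcal{F}\colon\{0\}=V_0\subset V_1\subset\cdots\subset V_n=V$ a chain of subspaces with $\dim V_i=i$. Let $U\le V$ be a subspace, $v\mapsto\overline v$ the canonical map $V\to\overline V:=V/U$, $P$ the stabilizer of $U$ in $\mathrm{Aut}(V)$, and $\pi\colon P\to\mathrm{Aut}(\overline V)$ the epimorphism $\pi(f)(\overline v)=\overline{f(v)}$. Then $\pi$ maps $\mathrm{stab}_P(\mathcal{F})$ onto $\mathrm{stab}_{\mathrm{Aut}(\overline V)}(\overline{\mathcal{F}})$, where $\overline{\mathcal{F}}$ is the chain $0=\overline V_0\subseteq\overline V_1\subseteq\cdots\subseteq\overline V_n=\overline V$.
   Context: $\mathrm{stab}_H(\mathcal{F})$ denotes the set of elements of $H$ mapping each member of the chain onto itself; $\overline{V}_i$ is the image of $V_i$ in $V/U$. *)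

(* Defs.v *)
From HB Require Import structures.
From mathcomp Require Import all_boot all_algebra.
Set Implicit Arguments. Unset Strict Implicit. Unset Printing Implicit Defensive.
Import GRing.Theory.
Local Open Scope ring_scope.

Definition isAut (K : fieldType) (vT : vectType K) (f : 'End(vT)) : bool :=
  (lker f == 0)%VS && (limg f == fullv)%VS.

(* Given the canonical surjection q : V -> V/U, the induced map
   pi(f)(q v) = q (f v), written as q \o f \o q^-1, where q^-1 is a linear
   right inverse of q on its (full) image. *)
Definition piq (K : fieldType) (vT wT : vectType K) (q : 'Hom(vT, wT))
  (f : 'End(vT)) : 'End(wT) := (q \o f \o q^-1)%VF.

(* Main.v *)
From HB Require Import structures.
From mathcomp Require Import all_boot all_algebra.
Require Import Defs.
Import GRing.Theory.
Local Open Scope ring_scope.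

Section Build.
Variables (K : fieldType) (vT wT : vectType K) (m : nat) (t : m.-tuple vT) (y : nat -> wT).
Definition bmap (v : vT) : wT := \sum_(i < m) coord t i v *: y i.
Fact bmap_lin : linear bmap.
Proof.
move=> a u v; rewrite /bmap scaler_sumr -big_split /=; apply: eq_bigr => i _.
by rewrite linearP /= scalerDl scalerA.
Qed.
HB.instance Definition _ := GRing.isLinear.Build K vT wT _ bmap bmap_lin.

Lemma bmap_basis (i : 'I_m) : free t -> bmap t`_i = y i.
Proof.
move=> fr; rewrite /bmap (bigD1 i) //= coord_free // eqxx scale1r big1 ?addr0 //.
by move=> j /negbTE ji; rewrite coord_free // eq_sym ji scale0r.
Qed.
End Build.
Arguments bmap {K vT wT m}.
Arguments bmap_basis {K vT wT m t y}.

Lemma dim_add_line (K : fieldType) (vT : vectType K) (V : {vspace vT}) x :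
  x \notin V -> \dim (V + <[x]>)%VS = (\dim V).+1.
Proof.
move=> xV; apply/eqP; rewrite eqn_leq.
have le : (\dim (V + <[x]>) <= \dim V + \dim <[x]>)%N.
  by rewrite -dimv_sum_cap leq_addr.
rewrite (leq_trans le) ?dim_vline; last by rewrite -addn1 leq_add2l; case: (x != 0).
have := dimv_leqif_sup (addvSl V <[x]>); case=> le2 eq2.
by rewrite ltn_neqAle le2 andbT eq2 subv_add subvv /= -memvE xV.
Qed.
Theorem lemma7p5 (K : fieldType) (vT wT : vectType K) (n : nat)
  (hn : \dim {:vT} = n)
  (Vc : nat -> {vspace vT})
  (hV0 : Vc 0 = 0%VS)
  (hVinc : forall i, (i < n)%N -> (Vc i <= Vc i.+1)%VS)
  (hVdim : forall i, (i <= n)%N -> \dim (Vc i) = i)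
  (hVn : Vc n = fullv)
  (U : {vspace vT})
  (q : 'Hom(vT, wT)) (hqsurj : limg q = fullv) (hqker : lker q = U) :
  (forall f : 'End(vT),
      isAut f -> (f @: U)%VS = U -> (forall i, (i <= n)%N -> (f @: Vc i)%VS = Vc i) ->
      isAut (piq q f) /\
      (forall i, (i <= n)%N -> (piq q f @: (q @: Vc i))%VS = (q @: Vc i)%VS)) /\
  (forall g : 'End(wT),
      isAut g -> (forall i, (i <= n)%N -> (g @: (q @: Vc i))%VS = (q @: Vc i)%VS) ->
      exists f : 'End(vT),
        [/\ isAut f, (f @: U)%VS = U,
            (forall i, (i <= n)%N -> (f @: Vc i)%VS = Vc i) & piq q f = g]).
Proof.
have qK : forall w, q ((q^-1)%VF w) = w.
  by move=> w; apply: limg_lfunVK; rewrite hqsurj memvf.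
have piqE : forall f w, piq q f w = q (f ((q^-1)%VF w)).
  by move=> f w; rewrite /piq !comp_lfunE.
have inU : forall v, (v \in U) = (q v == 0) by move=> v; rewrite -hqker memv_ker.
split.
  move=> f /andP[kf0 imf] fU fV.
  have fUU : forall u, u \in U -> f u \in U.
    by move=> u uU; rewrite -fU memv_img.
  have piqq : forall v, piq q f (q v) = q (f v).
    move=> v; rewrite piqE; apply/eqP; rewrite -subr_eq0 -linearB -inU -linearB /=.
    by apply: fUU; rewrite inU linearB /= qK subrr.
  have cmp : (piq q f \o q = q \o f)%VF by apply/lfunP => v;
    transitivity (piq q f (q v)); [exact: comp_lfunE | by rewrite piqq comp_lfunE].
  split; last first.
    by move=> i lin; rewrite -limg_comp cmp limg_comp fV.
  have fK : forall v, f ((f^-1)%VF v) = v.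
    by move=> v; apply: limg_lfunVK; rewrite (eqP imf) memvf.
  apply/andP; split.
    apply/lker0P => w1 w2; rewrite !piqE => /eqP.
    rewrite -subr_eq0 -linearB -inU -linearB /= -fU.
    case/memv_imgP => u uU /(lker0P kf0) e.
    rewrite -(qK w1) -(qK w2); apply/eqP; rewrite -subr_eq0 -linearB /= -inU e //.
  rewrite eqEsubv subvf /=; apply/subvP => w _.
  have -> : w = piq q f (q ((f^-1)%VF ((q^-1)%VF w))) by rewrite piqq fK qK.
  exact: memv_img (memvf _).
move=> g /andP[kg0 img] gV.
pose P j (p : vT * vT) := (j < n)%N ==> [&& p.1 \in Vc j.+1, p.1 \notin Vc j,
   (U :&: Vc j.+1 <= Vc j)%VS || (p.1 \in U), p.2 \in Vc j.+1,
   q p.2 == g (q p.1) & (p.1 \in U) ==> (p.2 == p.1)].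
have Pex : forall j, exists p, P j p.
  move=> j; case: (ltnP j n) => jn; last by exists (0, 0); rewrite /P ltnNge jn.
  have [e [e1 e2 e3]] : exists e, [/\ e \in Vc j.+1, e \notin Vc j &
      (U :&: Vc j.+1 <= Vc j)%VS || (e \in U)].
    case: (boolP (U :&: Vc j.+1 <= Vc j)%VS) => hc.
      have : ~~ (Vc j.+1 <= Vc j)%VS.
        apply/negP => /dimvS; rewrite !hVdim ?ltnn // ltnW //.
      by case/subvPn => e e1 e2; exists e.
    by case/subvPn: hc => e /memv_capP [eU e1] e2; exists e; rewrite e1 e2 eU orbT.
  case: (boolP (e \in U)) => eU.
    have qe0 : q e = 0 by apply/eqP; rewrite -inU.
    by exists (e, e); rewrite /P jn /= e1 e2 e3 eU qe0 linear0 !eqxx.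
  have : g (q e) \in (q @: Vc j.+1)%VS by rewrite -gV // memv_img // memv_img.
  case/memv_imgP => y y1 ey.
  by exists (e, y); rewrite /P jn /= e1 e2 e3 y1 ey eqxx (negbTE eU).
pose p j := xchoose (Pex j).
pose e j := (p j).1; pose y j := (p j).2.
have pP : forall j, (j < n)%N -> [&& e j \in Vc j.+1, e j \notin Vc j,
   (U :&: Vc j.+1 <= Vc j)%VS || (e j \in U), y j \in Vc j.+1,
   q (y j) == g (q (e j)) & (e j \in U) ==> (y j == e j)].
  by move=> j jn; have /implyP := xchooseP (Pex j); apply.
have Hstep : forall j, (j < n)%N -> Vc j.+1 = (Vc j + <[e j]>)%VS.
  move=> j jn; have /and5P[e1 e2 _ _ _] := pP j jn.
  apply/eqP; rewrite eq_sym eqEdim subv_add (hVinc _ jn) -memvE e1 /=.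
  by rewrite (@dim_add_line _ _ _ _ e2) (hVdim _ jn) (hVdim _ (ltnW jn)).
have Hspan : forall j, (j <= n)%N -> Vc j = <<mkseq e j>>%VS.
  elim=> [|j IH] jn; first by rewrite hV0 span_nil.
  rewrite (Hstep _ jn) (IH (ltnW jn)) /mkseq -addn1 iotaD map_cat span_cat /=.
  by rewrite span_seq1 add0n.
pose t : n.-tuple vT := @Tuple n vT (mkseq e n) ltac:(by rewrite size_mkseq).
have bt : basis_of fullv t.
  rewrite basisEdim size_tuple hn leqnn andbT.
  by have := Hspan n (leqnn n); rewrite hVn => <-.
have ft := basis_free bt.
pose f := linfun (bmap t y).
have fE : forall v, f v = bmap t y v by move=> v; rewrite lfunE.
have fe : forall j, (j < n)%N -> f (e j) = y j.
  move=> j jn; have -> : e j = t`_(Ordinal jn) by rewrite /= nth_mkseq.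
  by rewrite fE bmap_basis.
have qf : forall v, q (f v) = g (q v).
  move=> v; rewrite fE /bmap {2}(@coord_span _ _ _ t v); last first.
    by move: bt => /andP[/eqP -> _]; rewrite memvf.
  rewrite !linear_sum; apply: eq_bigr => i _; rewrite !linearZ /=.
  have /and5P[_ _ _ _ /andP[/eqP -> _]] := pP i (ltn_ord i).
  by rewrite /= nth_mkseq.
have ynot : forall j, (j < n)%N -> y j \notin Vc j.
  move=> j jn; have /and5P[e1 e2 e3 y1 /andP[/eqP qy eUy]] := pP j jn.
  case: (boolP (e j \in U)) => eU.
    by rewrite (eqP (implyP eUy eU)).
  rewrite (negbTE eU) orbF in e3.
  apply/negP => yV.
  have : g (q (e j)) \in (g @: (q @: Vc j))%VS.
    by rewrite (gV j (ltnW jn)) -qy memv_img.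
  case/memv_imgP => w wV /(lker0P kg0) qew.
  case/memv_imgP: wV qew => v vV -> qev.
  have d : e j - v \in U by rewrite inU linearB /= qev subrr.
  have d2 : e j - v \in Vc j.
    apply: (subvP e3); rewrite memv_cap d /= rpredB //; exact: (subvP (hVinc _ jn)).
  have ee : e j = (e j - v) + v by rewrite subrK.
  by move: e2; rewrite ee rpredD.
have fV : forall j, (j <= n)%N -> (f @: Vc j)%VS = Vc j.
  elim=> [|j IH] jn; first by rewrite hV0 limg0.
  rewrite (Hstep _ jn) limgD (IH (ltnW jn)) limg_line (fe _ jn) -(Hstep _ jn).
  have /and5P[_ _ _ y1 _] := pP j jn.
  apply/eqP; rewrite eqEdim subv_add (hVinc _ jn) -memvE y1 /=.
  by rewrite (@dim_add_line _ _ _ _ (ynot _ jn)) (hVdim _ jn) (hVdim _ (ltnW jn)).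
have limf : limg f = fullv by rewrite -{1}hVn (fV n (leqnn n)) hVn.
have kf : lker f == 0%VS.
  have := limg_ker_dim f fullv; rewrite capfv limf => /eqP.
  by rewrite -{2}[\dim fullv]add0n eqn_add2r dimv_eq0.
exists f; split.
- by rewrite /isAut kf limf eqxx.
- apply/eqP; rewrite eqEdim; apply/andP; split.
    apply/subvP => x /memv_imgP [u uU ->].
    by rewrite inU qf (eqP (_ : q u == 0)) ?linear0 // -inU.
  by rewrite limg_dim_eq // (eqP kf) capv0.
- exact: fV.
- by apply/lfunP => w; rewrite piqE qf qK.
Qed.
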